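(* Let $d\ge 1$ and $p\in[0,1]$ with $0\le p<p_d=\frac{2d+1}{4d}$, and let $(S_n)$ be the $d$-dimensional elephant random walk with memory parameter $p$ described in the context. Then $$\lim_{n\to\infty}\frac{1}{n}S_n=0\quad\text{almost surely.}$$
   Context: Multi-dimensional elephant random walk (MERW). Fix a dimension $d\ge1$ and a memory parameter $p\in[0,1]$. Let $(e_1,\dots,e_d)$ be the standard basis of $\mathbb{R}^d$, $I_d$ the $d\times d$ identity matrix, and $J_d$ the $d\times d$ cyclic permutation matrix with entries $(J_d)_{i,i+1}=1$ for $1\le i\le d-1$, $(J_d)_{d,1}=1$, and all other entries $0$ (so $J_d^d=I_d$). Set $S_0=0$. The first step $X_1$ is uniformly distributed on the $2d$ vectors $\{\pm e_1,\dots,\pm e_d\}$. For $n\ge1$, given $\mathcal{F}_n=\sigma(X_1,\dots,X_n)$, the next step is $X_{n+1}=A_nX_{b_n}$, where $b_n$ is uniformly distributed on $\{1,\dots,n\}$, and $A_n$ is a random matrix, with $b_n$ and $A_n$ independent of each other and of $\mathcal{F}_n$, taking the value $I_d$ with probability $p$ and each of the $2d-1$ values $-I_d,\ \pm J_d,\ \pm J_d^2,\dots,\pm J_d^{d-1}$ with probability $\frac{1-p}{2d-1}$. The position is $S_n=X_1+\dots+X_n$. Define $a=\frac{2dp-1}{2d-1}$; note $p<p_d$ iff $a<1/2$. *)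

(* Defs.v *)
From HB Require Import structures.
From mathcomp Require Import all_boot all_order all_algebra.
From mathcomp Require Import all_classical all_reals all_analysis.
Set Implicit Arguments. Unset Strict Implicit. Unset Printing Implicit Defensive.
Import Order.TTheory GRing.Theory Num.Theory.
Import numFieldNormedType.Exports.
Local Open Scope ring_scope.
Local Open Scope classical_set_scope.

(* Multi-dimensional elephant random walk, specified through the joint law
   of its steps X_1, ..., X_n (indexed from 1; X 0 is unused). *)

Section MERW.
Variables (R : realType) (d : nat) (p : R).

Definition Jmat : 'M[R]_d := \matrix_(i < d, j < d) (((i.+1 %% d)%N == j)%:R).

Definition Jpow (k : nat) : 'M[R]_d := iter k (mulmx Jmat) 1%:M.

Definition evec (i : 'I_d) : 'cV[R]_d := \col_(j < d) ((j == i)%:R).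

Definition is_step (x : 'cV[R]_d) : bool :=
  [exists i : 'I_d, (x == evec i) || (x == - evec i)].

(* probability that A x = y, where A = I w.p. p and each of
   -I, +-J, ..., +-J^(d-1) w.p. (1-p)/(2d-1) *)
Definition qtrans (x y : 'cV[R]_d) : R :=
  p * (x == y)%:R +
  (1 - p) / (2 * d%:R - 1) *
    ((- x == y)%:R +
     \sum_(1 <= k < d) ((Jpow k *m x == y)%:R + (- (Jpow k *m x) == y)%:R)).

(* mu n x = P(X_1 = x 1, ..., X_n = x n) *)
Fixpoint merw_law (n : nat) (x : nat -> 'cV[R]_d) : R :=
  match n with
  | 0 => 1
  | 1 => (is_step (x 1%N))%:R / (2 * d%:R)
  | m.+1 => merw_law m x * (m%:R)^-1 *
              \sum_(1 <= k < m.+1) qtrans (x k) (x m.+1)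
  end.

End MERW.

Definition is_MERW (R : realType) (d : nat) (p : R)
  (dd : measure_display) (Omega : measurableType dd) (P : probability Omega R)
  (X : nat -> Omega -> 'cV[R]_d) : Prop :=
  (forall n x, measurable (X n @^-1` [set x])) /\
  (forall (n : nat) (x : nat -> 'cV[R]_d), (1 <= n)%N ->
     P [set w : Omega | forall k : nat, (1 <= k <= n)%N -> X k w = x k]
     = (merw_law p n x)%:E).

Definition Spos (R : realType) (d : nat) (Omega : Type)
  (X : nat -> Omega -> 'cV[R]_d) (n : nat) (w : Omega) : 'cV[R]_d :=
  \sum_(1 <= k < n.+1) X k w.

(* Main.v *)
Require Import Defs.
From HB Require Import structures.
From mathcomp Require Import all_boot all_order all_algebra.
From mathcomp Require Import all_classical all_reals all_analysis.
From mathcomp Require Import ring lra zify.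
Import Order.TTheory GRing.Theory Num.Theory.
Import numFieldNormedType.Exports.
Local Open Scope ring_scope.
Local Open Scope classical_set_scope.
Set Implicit Arguments. Unset Strict Implicit. Unset Printing Implicit Defensive.

Section Alg.
Variables (R : realType) (d : nat) (p : R).

Definition stv (t : 'I_d * bool) : 'cV[R]_d :=
  if t.2 then evec R t.1 else - evec R t.1.

Lemma evecE (i j : 'I_d) : evec R i j ord0 = (j == i)%:R.
Proof. by rewrite /evec mxE. Qed.
Arguments evecE : clear implicits.

Lemma stv_diag t : stv t t.1 ord0 = if t.2 then 1 else -1.
Proof. by rewrite /stv; case: t => i [] /=; rewrite /evec !mxE eqxx. Qed.

Lemma stv_entry t i : stv t i ord0 = if t.2 then (i == t.1)%:R else - (i == t.1)%:R.
Proof. by rewrite /stv; case: t => j [] /=; rewrite /evec !mxE. Qed.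

Lemma stv_inj : injective stv.
Proof.
move=> [i b] [j c] E.
have := congr1 (fun M : 'cV[R]_d => M i ord0) E.
rewrite !stv_entry /= eqxx.
have [<-|nij] := eqVneq j i.
  by case: b E; case: c => //= E; rewrite -?natrN => h; exfalso; move: h; rewrite /=; lra.
by case: b {E}; case: c => /= h; exfalso; move: h; lra.
Qed.

Lemma stv_sq t i : stv t i ord0 ^+ 2 <= 1.
Proof. by rewrite stv_entry; case: t.2; case: (i == _); rewrite /= ?sqrrN ?expr1n ?expr0n. Qed.

Lemma stvN t : - stv t = stv (t.1, ~~ t.2).
Proof. by rewrite /stv /=; case: t.2; rewrite ?opprK. Qed.


Hypothesis d0 : (0 < d)%N.

Lemma mod_lemma (r i : nat) : (r < d)%N -> (i < d)%N ->
  (r.+1 %% d == i)%N = (r == (i + d.-1) %% d)%N.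
Proof.
move=> rd id.
have E1 : (r.+1 %% d = if r.+1 == d then 0 else r.+1)%N.
  case: eqP => [->|h]; first by rewrite modnn.
  by rewrite modn_small //; lia.
have E2 : ((i + d.-1) %% d = if i == 0 then d.-1 else i.-1)%N.
  case: i id {E1} => [|i] id /=; first by rewrite modn_small //; lia.
  by rewrite (_ : i.+1 + d.-1 = i + d)%N; [rewrite modnDr modn_small //; lia | lia].
rewrite E1 E2; case: (r.+1 =P d) => h1; case: (i =P 0%N) => h2; apply/eqP/eqP; lia.
Qed.

Lemma Jmat_evec i : exists j, Jmat R d *m evec R i = evec R j.
Proof.
exists (Ordinal (ltn_pmod (i + d.-1) d0)).
apply/matrixP => r z; rewrite (ord1 z) !mxE.
rewrite (bigD1 i) //= !mxE eqxx mulr1 big1 ?addr0; last first.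
  by move=> j /negbTE nj; rewrite !mxE nj mulr0.
by rewrite mod_lemma.
Qed.

Lemma Jpow_evec k i : exists j, Jpow R d k *m evec R i = evec R j.
Proof.
elim: k i => [|k IH] i; first by exists i; rewrite /Jpow /= mul1mx.
have [j hj] := IH i.
have [l hl] := Jmat_evec j.
by exists l; rewrite (_ : Jpow R d k.+1 = Jmat R d *m Jpow R d k) // -mulmxA hj hl.
Qed.

Definition stepP (v : 'cV[R]_d) := exists t, v = stv t.

Lemma stepP_stv t : stepP (stv t). Proof. by exists t. Qed.

Lemma stepN v : stepP v -> stepP (- v).
Proof. by move=> [t ->]; rewrite stvN; exists (t.1, ~~ t.2). Qed.

Lemma stepJ k v : stepP v -> stepP (Jpow R d k *m v).
Proof.
move=> [[i b] ->]; have [j hj] := Jpow_evec k i.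
by exists (j, b); rewrite /stv /=; case: b; rewrite ?mulmxN hj.
Qed.

Lemma sum_ind w (g : 'cV[R]_d -> R) : stepP w ->
  \sum_t (w == stv t)%:R * g (stv t) = g w.
Proof.
move=> [t0 ->]; rewrite (bigD1 t0) //= eqxx mul1r big1 ?addr0 // => t nt.
by rewrite (inj_eq stv_inj) eq_sym (negbTE nt) mul0r.
Qed.

Definition cq := (1 - p) / (2 * d%:R - 1).

Lemma qsum v (g : 'cV[R]_d -> R) : stepP v ->
  \sum_t qtrans p v (stv t) * g (stv t) =
  p * g v + cq * (g (- v) + \sum_(1 <= k < d)
     (g (Jpow R d k *m v) + g (- (Jpow R d k *m v)))).
Proof.
move=> sv.
rewrite -(sum_ind g sv) -(sum_ind g (stepN sv)).
under [X in _ = _ + _ * (_ + X)]eq_bigr => k _ do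
  rewrite -(sum_ind g (stepJ k sv)) -(sum_ind g (stepN (stepJ k sv))) -big_split /=.
rewrite exchange_big /= -big_split /= !mulr_sumr -big_split /=.
apply: eq_bigr => t _; rewrite /qtrans /cq.
set G := g (stv t).
have -> : \sum_(1 <= i < d) ((Jpow R d i *m v == stv t)%:R * G +
        (- (Jpow R d i *m v) == stv t)%:R * G) =
   (\sum_(1 <= i < d) ((Jpow R d i *m v == stv t)%:R +
        (- (Jpow R d i *m v) == stv t)%:R)) * G.
  by rewrite mulr_suml; apply: eq_bigr => k _; rewrite mulrDl.
ring.
Qed.


Hypotheses (p0 : 0 <= p) (p1 : p <= 1).

Lemma den_gt0 : 0 < 2 * d%:R - 1 :> R.
Proof. have : (1 <= d%:R :> R) by rewrite ler1n. lra. Qed.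

Lemma cq_ge0 : 0 <= cq.
Proof. by apply: divr_ge0; [rewrite subr_ge0 | exact: ltW den_gt0]. Qed.

Lemma qtrans_ge0 (v w : 'cV[R]_d) : 0 <= qtrans p v w.
Proof.
rewrite /qtrans; apply: addr_ge0; first by rewrite mulr_ge0 ?ler0n.
apply: mulr_ge0; first exact: cq_ge0.
by rewrite addr_ge0 ?ler0n // sumr_ge0 // => k _; rewrite addr_ge0 ?ler0n.
Qed.

Lemma qsum1 v : stepP v -> \sum_t qtrans p v (stv t) = 1.
Proof.
move=> sv; have := qsum (fun _ => 1) sv.
under eq_bigr do rewrite mulr1.
move=> ->; rewrite sumr_const_nat /cq.
have hd := den_gt0.
rewrite -[(1 + 1) *+ _]mulr_natl natrB //.
field; lra.
Qed.

Definition acoef := p - cq.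

Lemma qsum_coord v i : stepP v ->
  \sum_t qtrans p v (stv t) * stv t i ord0 = acoef * v i ord0.
Proof.
move=> sv; have := qsum (fun y => y i ord0) sv.
move=> ->; rewrite big1 => [|k _]; last by rewrite !mxE addrN.
by rewrite mxE addr0 /acoef; ring.
Qed.

Lemma qsum_sq v i (z : R) : stepP v ->
  \sum_t qtrans p v (stv t) * (z + stv t i ord0) ^+ 2 <=
  z ^+ 2 + 2 * acoef * z * v i ord0 + 1.
Proof.
move=> sv.
have -> : \sum_t qtrans p v (stv t) * (z + stv t i ord0) ^+ 2 =
  z ^+ 2 * (\sum_t qtrans p v (stv t)) +
  2 * z * (\sum_t qtrans p v (stv t) * stv t i ord0) +
  \sum_t qtrans p v (stv t) * stv t i ord0 ^+ 2.
  rewrite !mulr_sumr -!big_split /=; apply: eq_bigr => t _; ring.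
rewrite qsum1 // qsum_coord // mulr1 lerD //; first by rewrite le_eqVlt; apply/orP; left; apply/eqP; ring.
rewrite -(qsum1 sv) ler_sum // => t _.
by rewrite ler_piMr ?qtrans_ge0 ?stv_sq.
Qed.


Definition steps : seq 'cV[R]_d := [seq stv t | t <- enum {: 'I_d * bool}].

Lemma big_steps (F : 'cV[R]_d -> R) : \sum_(s <- steps) F s = \sum_t F (stv t).
Proof. by rewrite big_map big_enum. Qed.

Lemma steps_stepP s : s \in steps -> stepP s.
Proof. by case/mapP => t _ ->; exists t. Qed.

Lemma stv_in t : stv t \in steps.
Proof. by apply: map_f; rewrite mem_enum. Qed.

Definition tofun (c : seq 'cV[R]_d) (k : nat) : 'cV[R]_d := nth 0 (0 :: c) k.

Fixpoint configs (n : nat) : seq (seq 'cV[R]_d) :=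
  if n is m.+1 then [seq rcons c s | c <- configs m, s <- steps] else [:: [::]].

Lemma configsP n c : c \in configs n -> size c = n /\ all (fun s => s \in steps) c.
Proof.
elim: n c => [|n IH] c /=; first by rewrite inE => /eqP ->.
case/allpairsP => [[c' s] /= [/IH [sc ac] ss ->]].
by rewrite size_rcons sc all_rcons ss ac.
Qed.

Lemma configsS (F : seq 'cV[R]_d -> R) n :
  \sum_(c <- configs n.+1) F c = \sum_(c <- configs n) \sum_(s <- steps) F (rcons c s).
Proof. by rewrite /= big_allpairs_dep. Qed.

Lemma tofun_rcons c s k :
  tofun (rcons c s) k = if k == (size c).+1 then s else tofun c k.
Proof using Type.
clear -R d.
rewrite /tofun -rcons_cons nth_rcons /=.
case: (ltngtP k (size c).+1) => h; case: (k =P (size c).+1) => h' //; try lia.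
by rewrite nth_default // /=; lia.
Qed.

Definition Lw (c : seq 'cV[R]_d) := merw_law p (size c) (tofun c).

Lemma merw_SS m (x : nat -> 'cV[R]_d) : merw_law p m.+2 x =
  merw_law p m.+1 x * (m.+1%:R)^-1 * \sum_(1 <= k < m.+2) qtrans p (x k) (x m.+2).
Proof using Type.
clear -R d. by []. Qed.

Lemma merw_local n (x y : nat -> 'cV[R]_d) :
  (forall k, (1 <= k <= n)%N -> x k = y k) -> merw_law p n x = merw_law p n y.
Proof using Type.
clear -R d.
elim: n => [|[|m] IH] h //; first by rewrite /= h.
rewrite !merw_SS IH => [|k /andP[k1 km]]; last by apply: h; rewrite k1 /=; lia.
congr (_ * _); apply: eq_big_nat => k /andP[k1 km].
by rewrite !h //; rewrite ?k1 /=; lia.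
Qed.

Lemma merw_ge0 n (x : nat -> 'cV[R]_d) : 0 <= merw_law p n x.
Proof.
elim: n => [|[|m] IH] //; first by rewrite /= divr_ge0 ?ler0n // mulr_ge0 ?ler0n.
by rewrite merw_SS !mulr_ge0 // ?invr_ge0 ?ler0n // sumr_ge0 // => k _; exact: qtrans_ge0.
Qed.

Lemma Lw_ge0 c : 0 <= Lw c. Proof. exact: merw_ge0. Qed.

Lemma Lw_rcons c s : (1 <= size c)%N ->
  Lw (rcons c s) = Lw c * ((size c)%:R)^-1 *
     \sum_(1 <= k < (size c).+1) qtrans p (tofun c k) s.
Proof using Type.
clear -R d.
rewrite /Lw size_rcons; case E: (size c) => [//|m] _.
rewrite merw_SS.
rewrite (@merw_local m.+1 (tofun (rcons c s)) (tofun c)); last first.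
  by move=> k /andP[_ km]; rewrite tofun_rcons E; case: eqP => //; lia.
congr (_ * _); apply: eq_big_nat => k /andP[_ km].
rewrite !tofun_rcons E eqxx; case: eqP => //; lia.
Qed.

Definition Ssum (c : seq 'cV[R]_d) := \sum_(s <- c) s.

Lemma Ssum_rcons c s : Ssum (rcons c s) = Ssum c + s.
Proof. by rewrite /Ssum big_rcons. Qed.

Lemma Ssum_tofun c : \sum_(1 <= k < (size c).+1) tofun c k = Ssum c.
Proof using Type.
clear -R d.
elim/last_ind: c => [|c s IH]; first by rewrite big_geq // /Ssum big_nil.
rewrite size_rcons big_nat_recr //= Ssum_rcons -IH tofun_rcons eqxx.
congr (_ + _); apply: eq_big_nat => k /andP[_ km].
by rewrite tofun_rcons; case: eqP => //; lia.
Qed.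


Lemma tofun_step c k : all (fun s => s \in steps) c -> (1 <= k <= size c)%N ->
  stepP (tofun c k).
Proof.
case: k => [//|k] /allP ac /= ks; apply: steps_stepP; apply: ac.
by rewrite /tofun /= mem_nth.
Qed.

Definition Fsq (v : 'cV[R]_d) := \sum_i (v i ord0) ^+ 2.

Lemma rec_tot n c : c \in configs n -> (1 <= n)%N ->
  \sum_(s <- steps) Lw (rcons c s) = Lw c.
Proof.
move=> /configsP [sc ac] n1.
under eq_bigr do rewrite Lw_rcons ?sc //.
rewrite -mulr_sumr exchange_big /=.
rewrite (eq_big_nat _ _ (F2 := fun _ => 1)); last first.
  move=> k kn; rewrite big_steps qsum1 //; apply: tofun_step => //.
  by rewrite sc.
rewrite sumr_const_nat subn1 /= -mulrA mulVf ?mulr1 //.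
by rewrite pnatr_eq0 -lt0n.
Qed.

Lemma sum_coord c i : \sum_(1 <= k < (size c).+1) tofun c k i ord0 = Ssum c i ord0.
Proof. by rewrite -Ssum_tofun summxE. Qed.

Lemma rec_mom n c : c \in configs n -> (1 <= n)%N ->
  \sum_(s <- steps) Lw (rcons c s) * Fsq (Ssum (rcons c s)) <=
  Lw c * (Fsq (Ssum c) * (1 + 2 * acoef / n%:R) + d%:R).
Proof.
move=> /[dup] cin /configsP [sc ac] n1.
under eq_bigr do rewrite Lw_rcons ?sc // Ssum_rcons.
set S := Ssum c.
have nz : (n%:R : R) != 0 by rewrite pnatr_eq0 -lt0n.
have -> : \sum_(s <- steps) Lw c * (n%:R)^-1 *
     (\sum_(1 <= k < n.+1) qtrans p (tofun c k) s) * Fsq (S + s) =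
   Lw c * (n%:R)^-1 * \sum_(1 <= k < n.+1) \sum_i
     \sum_t qtrans p (tofun c k) (stv t) * (S i ord0 + stv t i ord0) ^+ 2.
  under eq_bigr do rewrite -mulrA mulr_suml.
  rewrite -mulr_sumr; congr (_ * _).
  rewrite exchange_big /=; apply: eq_big_nat => k _.
  rewrite big_steps exchange_big /=; apply: eq_bigr => t _.
  rewrite /Fsq mulr_sumr; apply: eq_bigr => i _.
  by rewrite mxE.
apply: (@le_trans _ _ (Lw c / n%:R * \sum_(1 <= k < n.+1) \sum_i
    (S i ord0 ^+ 2 + 2 * acoef * S i ord0 * tofun c k i ord0 + 1))).
  apply: ler_wpM2l.
    by apply: mulr_ge0; [exact: Lw_ge0 | rewrite invr_ge0 ler0n].
  apply: ler_sum_nat => k kn; apply: ler_sum => i _.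
  have sk : stepP (tofun c k) by apply: tofun_step; rewrite ?sc.
  exact: qsum_sq.
rewrite le_eqVlt; apply/orP; left; apply/eqP.
rewrite exchange_big /=.
have -> : \sum_i \sum_(1 <= k < n.+1)
    (S i ord0 ^+ 2 + 2 * acoef * S i ord0 * tofun c k i ord0 + 1) =
   \sum_i ((n%:R + 2 * acoef) * S i ord0 ^+ 2 + n%:R).
  apply: eq_bigr => i _.
  rewrite !big_split /= !sumr_const_nat subn1 /= -mulr_sumr.
  rewrite -sc sum_coord -/S sc.
  by rewrite -[S i ord0 ^+ 2 *+ n]mulr_natl; ring.
rewrite big_split /= -mulr_sumr sumr_const card_ord -/(Fsq S).
rewrite -[n%:R *+ d]mulr_natl.
field.
by rewrite nz.
Qed.

Definition Tot n := \sum_(c <- configs n) Lw c.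
Definition Mom n := \sum_(c <- configs n) Lw c * Fsq (Ssum c).

Lemma is_step_stv t : is_step (stv t).
Proof. by apply/existsP; exists t.1; rewrite /stv; case: t.2; rewrite eqxx ?orbT. Qed.

Lemma sum1 : \sum_t Lw [:: stv t] = 1.
Proof.
rewrite /Lw /=.
under eq_bigr do rewrite /tofun /= is_step_stv mul1r.
rewrite sumr_const card_prod card_ord card_bool -[_ *+ (d * 2)%N]mulr_natr natrM.
by field; rewrite pnatr_eq0 -lt0n.
Qed.

Lemma configs1 (F : seq 'cV[R]_d -> R) : \sum_(c <- configs 1) F c = \sum_t F [:: stv t].
Proof. by rewrite configsS big_seq1 big_steps. Qed.

Lemma Tot1 : Tot 1 = 1.
Proof. by rewrite /Tot configs1 sum1. Qed.

Lemma TotS n : (1 <= n)%N -> Tot n.+1 = Tot n.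
Proof.
move=> n1; rewrite /Tot configsS !big_seq; apply: eq_bigr => c cin.
exact: rec_tot cin n1.
Qed.

Lemma Tot_eq1 n : (1 <= n)%N -> Tot n = 1.
Proof.
elim: n => [//|[|n] IH] _; first exact: Tot1.
by rewrite TotS // IH.
Qed.

Lemma Fsq_ge0 v : 0 <= Fsq v.
Proof. by rewrite sumr_ge0 // => i _; rewrite sqr_ge0. Qed.

Lemma Fsq_stv t : Fsq (stv t) <= d%:R.
Proof.
rewrite /Fsq (@le_trans _ _ (\sum_(i < d) (1 : R))) //.
  by apply: ler_sum => i _; exact: stv_sq.
by rewrite sumr_const card_ord.
Qed.

Lemma Mom_ge0 n : 0 <= Mom n.
Proof. by rewrite sumr_ge0 // => c _; rewrite mulr_ge0 ?Lw_ge0 ?Fsq_ge0. Qed.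

Lemma Mom1 : Mom 1 <= d%:R.
Proof.
rewrite /Mom configs1 (@le_trans _ _ (\sum_t Lw [:: stv t] * d%:R)) //.
  apply: ler_sum => t _; rewrite /Ssum big_seq1.
  by apply: ler_wpM2l; [exact: Lw_ge0 | exact: Fsq_stv].
by rewrite -mulr_suml sum1 mul1r.
Qed.

Lemma MomS n : (1 <= n)%N ->
  Mom n.+1 <= Mom n * (1 + 2 * acoef / n%:R) + d%:R * Tot n.
Proof.
move=> n1; rewrite /Mom /Tot configsS.
rewrite (@le_trans _ _ (\sum_(c <- configs n)
     Lw c * (Fsq (Ssum c) * (1 + 2 * acoef / n%:R) + d%:R))) //.
  by rewrite !big_seq; apply: ler_sum => c cin; exact: rec_mom cin n1.
rewrite mulr_suml mulr_sumr -big_split /= le_eqVlt; apply/orP; left; apply/eqP.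
by apply: eq_bigr => c _; ring.
Qed.

Hypothesis ha : 2 * acoef < 1.

Definition Kc := d%:R * (1 + (1 - 2 * acoef)^-1).

Lemma Mom_bound n : (1 <= n)%N -> Mom n <= Kc * n%:R.
Proof.
have b0 : 0 < 1 - 2 * acoef by rewrite subr_gt0.
have binv : 0 < (1 - 2 * acoef)^-1 by rewrite invr_gt0.
have dge : (1 <= d%:R :> R) by rewrite ler1n.
have Kd : d%:R <= Kc.
  by rewrite /Kc mulrDr mulr1 lerDl mulr_ge0 ?ler0n // ltW.
have Kb : Kc * (1 - 2 * acoef) = d%:R * (1 - 2 * acoef) + d%:R.
  by rewrite /Kc; field; lra.
elim: n => [//|[|n] IH] _; first by rewrite mulr1 (le_trans Mom1).
have IH' := IH isT.
rewrite (le_trans (MomS _)) // Tot_eq1 // mulr1.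
set f := 1 + 2 * acoef / n.+1%:R.
have hn : (0 < n.+1%:R :> R) by rewrite ltr0n.
have M0 := Mom_ge0 n.+1.
have [f0|f0] := leP 0 f.
  have h1 : Mom n.+1 * f <= Kc * n.+1%:R * f by rewrite ler_wpM2r.
  have h2 : Kc * n.+1%:R * f = Kc * n.+1%:R + 2 * acoef * Kc.
    by rewrite /f; field; lra.
  have h3 : (n.+2%:R : R) = n.+1%:R + 1 by rewrite -natr1.
  rewrite h3; nra.
have h1 : Mom n.+1 * f <= 0 by rewrite mulr_ge0_le0 // ltW.
have h3 : (1 <= n.+2%:R :> R) by rewrite ler1n.
have : Kc <= Kc * n.+2%:R by rewrite ler_peMr // (le_trans _ Kd) // ler0n.
lra.
Qed.

Definition Qb (j n : nat) (c : seq 'cV[R]_d) : bool :=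
  [exists i, n%:R < j.+1%:R * `|Ssum c i ord0|].

Lemma sq_le_Fsq (v : 'cV[R]_d) i : v i ord0 ^+ 2 <= Fsq v.
Proof.
rewrite /Fsq (bigD1 i) //= lerDl sumr_ge0 // => k _.
by rewrite sqr_ge0.
Qed.

Lemma cheb j n : (1 <= n)%N ->
  \sum_(c <- configs n | Qb j n c) Lw c <= j.+1%:R ^+ 2 * Kc / n%:R.
Proof.
move=> n1.
have hn : (0 < n%:R :> R) by rewrite ltr0n.
have hj : (0 < j.+1%:R :> R) by rewrite ltr0n.
rewrite big_mkcond /=.
rewrite (@le_trans _ _ (\sum_(c <- configs n)
    Lw c * (j.+1%:R ^+ 2 * Fsq (Ssum c) / n%:R ^+ 2))) //.
  apply: ler_sum => c _; case: ifP => hQ; last first.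
    by rewrite mulr_ge0 ?Lw_ge0 // divr_ge0 ?mulr_ge0 ?Fsq_ge0 ?sqr_ge0.
  rewrite ler_peMr ?Lw_ge0 // ler_pdivlMr ?exprn_gt0 // mul1r.
  case/existsP: hQ => i hi.
  have h1 : n%:R ^+ 2 <= (j.+1%:R * `|Ssum c i ord0|) ^+ 2.
    by rewrite lerXn2r ?nnegrE ?ler0n ?mulr_ge0 ?ler0n // ltW.
  rewrite (le_trans h1) // exprMn real_normK ?num_real //.
  by rewrite ler_wpM2l ?sqr_ge0 // sq_le_Fsq.
rewrite -/(Mom n) (_ : \sum_(c <- configs n) _ = j.+1%:R ^+ 2 / n%:R ^+ 2 * Mom n).
  rewrite (@le_trans _ _ (j.+1%:R ^+ 2 / n%:R ^+ 2 * (Kc * n%:R))) //.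
    by rewrite ler_wpM2l ?Mom_bound // divr_ge0 ?sqr_ge0.
  rewrite le_eqVlt; apply/orP; left; apply/eqP; field; lra.
rewrite /Mom mulr_sumr; apply: eq_bigr => c _; field; lra.
Qed.

End Alg.

Definition nn (m : nat) : nat := (m.+1 * m.+2)%N.

Lemma nnS m : nn m.+1 = (nn m + 2 * m.+2)%N.
Proof. rewrite /nn; nia. Qed.

Lemma nn_mono m1 m2 : (m1 <= m2)%N -> (nn m1 <= nn m2)%N.
Proof. by move=> h; rewrite /nn leq_mul. Qed.

Lemma nn_bracket m0 n : (nn m0 <= n)%N ->
  exists m, [/\ (m0 <= m)%N, (nn m <= n)%N & (n < nn m.+1)%N].
Proof.
elim: n => [|n IH] h; first by move: h; rewrite /nn; nia.
have [h'|h'] := leqP (nn m0) n.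
  have [m [h1 h2 h3]] := IH h'.
  have [h4|h4] := leqP (nn m.+1) n.+1.
    exists m.+1; split.
    - lia.
    - exact: h4.
    - move: h3 h4; rewrite !nnS; lia.
  exists m; split.
  - exact: h1.
  - lia.
  - exact: h4.
have e : nn m0 = n.+1 by lia.
exists m0; split.
- by [].
- lia.
- rewrite -e nnS; lia.
Qed.

Lemma det (R : realType) (s : nat -> R) :
  (forall n, `|s n.+1 - s n| <= 1) ->
  (forall j, exists M, forall m, (M <= m)%N -> j.+1%:R * `|s (nn m)| <= (nn m)%:R) ->
  (fun n => s n / n%:R) @ \oo --> 0.
Proof.
move=> h1 h2.
have gap : forall a b, (a <= b)%N -> `|s b - s a| <= (b - a)%:R.
  move=> a b ab; elim: b ab => [|b IH] ab.
    by rewrite (_ : a = 0%N) ?subrr ?normr0 //; lia.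
  have [e|lt] := eqVneq a b.+1; first by rewrite e subrr normr0 subnn.
  have ab' : (a <= b)%N by lia.
  rewrite (_ : s b.+1 - s a = (s b.+1 - s b) + (s b - s a)); last by ring.
  rewrite (le_trans (ler_normD _ _)) // (_ : (b.+1 - a)%N = (b - a).+1); last by lia.
  by rewrite -natr1 addrC lerD // IH.
apply/cvgrPdist_le => e e0.
set J := Num.Def.archi_bound (4 / e).
have hJ : 4 / e < J%:R by apply: archi_boundP; rewrite divr_ge0 // ltW.
have [M hM] := h2 J.
exists (nn (maxn M J)) => // n /= hn.
have [m [m1 m2 m3]] := nn_bracket hn.
have hMm : (M <= m)%N by lia.
have hJm : (J <= m)%N by lia.
have := hM m hMm.
have := gap _ _ m2.
set A := s (nn m); set B := s n.
move=> g1 g2.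
have n0 : (0 < n)%N by move: m2; rewrite /nn; nia.
have hn0 : (0 < n%:R :> R) by rewrite ltr0n.
rewrite sub0r normrN normrM normfV [`|n%:R|]ger0_norm ?ler0n // ler_pdivrMr //.
have eJ : 4 < e * J.+1%:R.
  move: hJ; rewrite ltr_pdivrMr // => hJ.
  by rewrite -natr1; nra.
have hnn : ((nn m)%:R : R) <= n%:R by rewrite ler_nat.
have hd : ((n - nn m)%N%:R : R) <= 2 * m.+2%:R.
  rewrite (@le_trans _ _ ((nn m.+1 - nn m)%N%:R)) //; first by rewrite ler_nat; lia.
  by rewrite -natrM ler_nat nnS; lia.
have hnm : (m.+1%:R * m.+2%:R : R) <= n%:R by rewrite -natrM ler_nat.
have hmJ : (J.+1%:R : R) <= m.+1%:R by rewrite ler_nat.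
have hB : `|B| <= `|A| + (n - nn m)%N%:R.
  rewrite (_ : B = A + (B - A)); last by ring.
  by rewrite (le_trans (ler_normD _ _)) // lerD.
have hJ0 : (0 < J.+1%:R :> R) by rewrite ltr0n.
have hA : `|A| * J.+1%:R <= n%:R by rewrite mulrC (le_trans g2).
have hm2 : (0 < m.+2%:R :> R) by rewrite ltr0n.
have Ab : 0 <= `|A| by [].
nra.
Qed.

Section Meas.
Variables (R : realType) (d : nat) (p : R)
  (dd : measure_display) (Omega : measurableType dd) (P : probability Omega R)
  (X : nat -> Omega -> 'cV[R]_d).
Hypothesis hX : is_MERW p P X.

Definition cyl (c : seq 'cV[R]_d) : set Omega :=
  [set w | forall k, (1 <= k <= size c)%N -> X k w = tofun c k].

Lemma cyl_meas c : measurable (cyl c).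
Proof.
have -> : cyl c = \bigcap_(k in [set k | (1 <= k <= size c)%N]) (X k @^-1` [set tofun c k]).
  by apply/seteqP; split => w /=.
by apply: bigcap_measurableType => k _; exact: hX.1.
Qed.

Lemma P_cyl c : (1 <= size c)%N -> P (cyl c) = (Lw p c)%:E.
Proof. by move=> h; rewrite -hX.2. Qed.

Lemma le_bigU (s : seq (seq 'cV[R]_d)) (Q : pred (seq 'cV[R]_d)) :
  (P (\big[setU/set0]_(c <- s | Q c) cyl c) <= \sum_(c <- s | Q c) P (cyl c))%E.
Proof.
suff : measurable (\big[setU/set0]_(c <- s | Q c) cyl c) /\
   (P (\big[setU/set0]_(c <- s | Q c) cyl c) <= \sum_(c <- s | Q c) P (cyl c))%E by case.
apply: (big_ind2 (fun A e => measurable A /\ (P A <= e)%E)).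
- by split; [exact: measurable0 | rewrite measure0].
- move=> A1 e1 A2 e2 [m1 h1] [m2 h2]; split; first exact: measurableU.
  by rewrite (le_trans (measureU2 _ m1 m2)) // leeD.
- by move=> c _; split; [exact: cyl_meas | ].
Qed.

Lemma bigU_meas (s : seq (seq 'cV[R]_d)) (Q : pred (seq 'cV[R]_d)) :
  measurable (\big[setU/set0]_(c <- s | Q c) cyl c).
Proof. by apply: bigsetU_measurable => c _; exact: cyl_meas. Qed.

Lemma cyl_eq n c c' w : c \in configs R d n -> c' \in configs R d n ->
  cyl c w -> cyl c' w -> c = c'.
Proof.
move=> /configsP [sc _] /configsP [sc' _] h h'.
apply: (@eq_from_nth _ 0); first by rewrite sc sc'.
move=> i hi; have := h i.+1; have := h' i.+1.
by rewrite /tofun /= sc sc' -sc hi => -> // ->.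
Qed.

Lemma uniq_steps : uniq (steps R d).
Proof. by rewrite map_inj_uniq ?enum_uniq //; exact: stv_inj. Qed.

Lemma uniq_configs n : uniq (configs R d n).
Proof.
elim: n => [//|n IH] /=.
apply: allpairs_uniq => //; first exact: uniq_steps.
by move=> [c s] [c' s'] _ _ /= /rcons_inj [-> ->].
Qed.

Lemma mem_bigU (s : seq (seq 'cV[R]_d)) (Q : pred _) w :
  (\big[setU/set0]_(c <- s | Q c) cyl c) w <-> exists c, [/\ c \in s, Q c & cyl c w].
Proof.
elim: s => [|c s IH]; first by rewrite big_nil; split => // [[c []]].
rewrite big_cons; case: ifP => hQ.
  split.
    case => [h|/IH [c' [h1 h2 h3]]]; first by exists c; rewrite inE eqxx.
    by exists c'; rewrite inE h1 orbT.
  move=> [c' [h1 h2 h3]]; move: h1; rewrite inE => /orP [/eqP <-|h1]; first by left.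
  by right; apply/IH; exists c'.
split.
  by move=> /IH [c' [h1 h2 h3]]; exists c'; rewrite inE h1 orbT.
move=> [c' [h1 h2 h3]]; apply/IH; exists c'; split => //.
by move: h1; rewrite inE => /orP [/eqP E|//]; rewrite E hQ in h2.
Qed.

Lemma eq_bigU_gen n (s : seq (seq 'cV[R]_d)) : uniq s -> {subset s <= configs R d n} ->
  P (\big[setU/set0]_(c <- s) cyl c) = (\sum_(c <- s) P (cyl c))%E.
Proof.
elim: s => [|c s IH] /=; first by rewrite !big_nil measure0.
move=> /andP [cs us] sub.
rewrite !big_cons measureU; [|exact: cyl_meas|exact: bigU_meas|].
  by congr (_ + _)%E; apply: IH => // x xs; apply: sub; rewrite inE xs orbT.
apply/seteqP; split => // w [h1 /mem_bigU [c' [h2 _ h3]]].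
have E := cyl_eq (sub c (mem_head _ _)) (sub c' _) h1 h3.
by move: cs; rewrite E ?h2 // inE h2 orbT.
Qed.

Hypotheses (d0 : (0 < d)%N) (p0 : 0 <= p) (p1 : p <= 1) (ha : 2 * acoef d p < 1).

Definition U n := \big[setU/set0]_(c <- configs R d n) cyl c.

Lemma PU n : (1 <= n)%N -> P (U n) = 1%E.
Proof.
move=> n1; rewrite /U (@eq_bigU_gen n) ?uniq_configs //.
rewrite big_seq (eq_bigr (fun c => (Lw p c)%:E)); last first.
  by move=> c /configsP [sc _]; rewrite P_cyl // sc.
rewrite -big_seq sumEFin.
by have := @Tot_eq1 R d p; rewrite /Tot => -> //.
Qed.

Lemma PnotU n : (1 <= n)%N -> P (~` U n) = 0%E.
Proof. move=> n1; rewrite probability_setC; last exact: bigU_meas.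
by rewrite PU // subee. Qed.

Lemma stepP_of_U n w k : U n w -> (1 <= k <= n)%N -> stepP (X k w).
Proof.
move=> /mem_bigU [c [cin _ cw]] kn; have [sc ac] := configsP cin.
by rewrite (cw k) ?sc //; apply: tofun_step => //; rewrite sc.
Qed.

Lemma cfg_exists n w : (forall k, (1 <= k <= n)%N -> stepP (X k w)) ->
  exists2 c, c \in configs R d n & cyl c w.
Proof.
elim: n => [|n IH] h; first by exists [::] => // k /=; lia.
have [c cin cw] := IH (fun k hk => h k (ltac:(lia))).
have [t ht] := h n.+1 (ltac:(lia)).
have [sc _] := configsP cin.
exists (rcons c (stv R t)).
  by apply: allpairs_f => //; exact: stv_in.
move=> k; rewrite size_rcons tofun_rcons sc => hk.
case: eqP => [->//|ne]; apply: cw; rewrite sc; lia.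
Qed.

Lemma Spos_cyl c w : cyl c w -> Spos X (size c) w = Ssum c.
Proof.
move=> cw; rewrite /Spos -Ssum_tofun; apply: eq_big_nat => k hk.
by apply: cw.
Qed.

Definition Ev (j m : nat) : set Omega :=
  \big[setU/set0]_(c <- configs R d (nn m) | Qb j (nn m) c) cyl c.

Lemma PEv j m : (P (Ev j m) <= (j.+1%:R ^+ 2 * Kc d p / (nn m)%:R)%:E)%E.
Proof.
rewrite (le_trans (le_bigU _ _)) //.
rewrite big_seq_cond (eq_bigr (fun c => (Lw p c)%:E)); last first.
  by move=> c /andP [/configsP [sc _] _]; rewrite P_cyl // sc /nn.
rewrite -big_seq_cond sumEFin lee_fin.
by apply: cheb => //; rewrite /nn.
Qed.

Lemma tele N : \sum_(0 <= m < N) ((nn m)%:R : R)^-1 = 1 - (N.+1%:R)^-1.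
Proof.
elim: N => [|N IH]; first by rewrite big_geq // invr1 subrr.
rewrite big_nat_recr //= IH /nn natrM.
have h1 : (N.+1%:R : R) != 0 by rewrite pnatr_eq0.
have h2 : (N.+2%:R : R) != 0 by rewrite pnatr_eq0.
field; apply/andP; split; apply/eqP; have := ler0n R N; lra.
Qed.

Lemma series_fin j : (\sum_(0 <= m <oo) P (Ev j m) < +oo)%E.
Proof.
set C := j.+1%:R ^+ 2 * Kc d p.
have C0 : 0 <= C.
  rewrite /C mulr_ge0 ?sqr_ge0 // /Kc mulr_ge0 ?ler0n // addr_ge0 // invr_ge0.
  by rewrite subr_ge0 ltW.
rewrite (@le_lt_trans _ _ (\sum_(0 <= m <oo) (C / (nn m)%:R)%:E)%E) ?ltry //.
  by apply: lee_nneseries => // m _; exact: PEv.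
rewrite (@le_lt_trans _ _ C%:E) ?ltry //.
apply: lime_le.
  by apply: is_cvg_nneseries => m _ _; rewrite lee_fin divr_ge0 ?ler0n.
apply: nearW => N /=.
rewrite sumEFin lee_fin.
under eq_bigr do rewrite mulrC.
rewrite -mulr_suml tele ler_piMl //.
Qed.

Lemma Ev_meas j m : measurable (Ev j m).
Proof. exact: bigU_meas. Qed.

Lemma limsup0 j : P (lim_sup_set (Ev j)) = 0%E.
Proof. by apply: lim_sup_set_cvg0; [exact: Ev_meas | exact: series_fin]. Qed.

Lemma stepP_le1 (v : 'cV[R]_d) i : stepP v -> `|v i ord0| <= 1.
Proof.
move=> [t ->]; rewrite stv_entry.
by case: t.2; case: (i == _); rewrite /= ?normrN ?normr1 ?normr0 ?ler01.
Qed.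

Lemma main_ae : {ae P, forall w, forall i : 'I_d,
     (fun n : nat => (Spos X n w) i ord0 / n%:R) @ \oo --> (0 : R)%R}.
Proof.
set NN := \bigcup_k (~` U k.+1) `|` \bigcup_j lim_sup_set (Ev j).
apply: (@negligibleS _ _ _ _ NN); last first.
  apply: negligibleU; apply: negligible_bigcup => k.
    exists (~` U k.+1); split.
    - by apply: measurableC; exact: bigU_meas.
    - exact: PnotU.
    - by [].
  exists (lim_sup_set (Ev k)); split.
  - apply: bigcapT_measurable => n; apply: bigcup_measurable => m _.
    exact: Ev_meas.
  - exact: limsup0.
  - by [].
move=> w /= notprop; apply: contrapT => nN; apply: notprop => i.
have H1 : forall k, (1 <= k)%N -> stepP (X k w).
  case=> [//|k] _.
  have Uw : U k.+1 w.
    by apply: contrapT => nU; apply: nN; left; exists k.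
  by apply: (stepP_of_U Uw); rewrite leqnn.
apply: det.
  move=> n; rewrite /Spos big_nat_recr //= mxE addrC addrK.
  by apply: stepP_le1; apply: H1.
move=> j.
have nL : ~ lim_sup_set (Ev j) w by move=> h; apply: nN; right; exists j.
have [M hM] : exists M, forall m, (M <= m)%N -> ~ Ev j m w.
  apply: contrapT => hne; apply: nL => N _.
  apply: contrapT => hN; apply: hne; exists N => m hm hE; apply: hN.
  by exists m.
exists M => m hm.
have hs : forall k, (1 <= k <= nn m)%N -> stepP (X k w) by move=> k /andP [k1 _]; exact: H1.
have [c cin cw] := cfg_exists hs.
have [sc _] := configsP cin.
have Qf : Qb j (nn m) c = false.
  apply: negbTE; apply/negP => hQ; apply: (hM m hm).
  by apply/mem_bigU; exists c.
rewrite -sc Spos_cyl // sc.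
move/negbT: Qf; rewrite negb_exists => /forallP /(_ i).
by rewrite -leNgt.
Qed.

End Meas.

Unset Implicit Arguments.
Theorem theorem3p1 (R : realType) (d : nat) (p : R)
  (dd : measure_display) (Omega : measurableType dd) (P : probability Omega R)
  (X : nat -> Omega -> 'cV[R]_d) :
  (1 <= d)%N -> 0 <= p -> p <= 1 ->
  p < (2 * d%:R + 1) / (4 * d%:R) ->
  is_MERW p P X ->
  {ae P, forall w, forall i : 'I_d,
     (fun n : nat => (Spos X n w) i ord0 / n%:R) @ \oo --> (0 : R)%R}.
Proof.
move=> d1 p0 p1 hp hX.
have hd : (1 <= d%:R :> R) by rewrite ler1n.
have ha : 2 * acoef d p < 1.
  have h4 : p * (4 * d%:R) < 2 * d%:R + 1.
    by rewrite -ltr_pdivlMr // mulr_gt0 // ltr0n.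
  rewrite -subr_gt0.
  have -> : 1 - 2 * acoef d p = (2 * d%:R + 1 - 4 * d%:R * p) / (2 * d%:R - 1).
    by rewrite /acoef /cq; field; apply/eqP; lra.
  by apply: divr_gt0; lra.
exact: (main_ae hX d1 p0 p1 ha).
Qed.
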